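(* Assume that the linear program $$\min_{q\ge0}\sum_{s,a}q(s,a)c(s,a)\ \text{ s.t. }\ \sum_{a}q(s,a)=1+\sum_{s'\in\mathcal S,a}q(s',a)\hat P(s|s',a)\ \ \forall s\in\mathcal S$$ has a feasible solution. Then the optimal value of Program (A) $$\max_{x\in\mathbb{R}^N}\sum_{s\in\mathcal S}x_s\ \text{ s.t. }\ x_s\le c(s,a)+\sum_{s'}\hat P(s'|s,a)x_{s'}+\mathrm{CB}_{\min}(s,a)(x)\ \ \forall s\in\mathcal S,a\in\mathcal A(s)$$ equals the optimal value of Program (B) $$\min_{q\ge 0,\ \tilde P}\ \sum_{s,a}q(s,a)c(s,a)\ \text{ s.t. }\ \tilde P(\cdot|s,a)\in\mathcal P_\epsilon(s,a)\ \forall (s,a),\quad \sum_a q(s,a)=1+\sum_{s',a}q(s',a)\tilde P(s|s',a)\ \ \forall s\in\mathcal S,$$ i.e. there is no duality gap between (A) and (B).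
   Context: SSP setting with finite states $\mathcal S=\{1,\dots,N\}$, finite action sets $\mathcal A(s)$, known costs $c(s,a)\in[0,1]$, and an estimated substochastic transition function $\hat P(s'|s,a)\ge0$, $\sum_{s'\in\mathcal S}\hat P(s'|s,a)\le 1$. Let $\Delta_{\mathcal S}=\{p\in\mathbb{R}^{\mathcal S}: p\ge0,\ \sum_{s'}p_{s'}\le1\}$. Let $D:\mathbb{R}_{\ge0}^{\mathcal S}\times\mathbb{R}_{\ge0}^{\mathcal S}\to[0,\infty)$ be jointly convex, with $D(p,p)=0$, and positively homogeneous: $D(\alpha p,\alpha p')=\alpha D(p,p')$ for all $\alpha\ge0$. Let $\epsilon(s,a)>0$. Define $\mathcal P_\epsilon(s,a)=\{\tilde p\in\Delta_{\mathcal S}: D(\tilde p,\hat P(\cdot|s,a))\le\epsilon(s,a)\}$ and, for $x\in\mathbb{R}^N$, $\mathrm{CB}_{\min}(s,a)(x)=\min_{\tilde p\in\mathcal P_\epsilon(s,a)}\sum_{s'\in\mathcal S}(\tilde p_{s'}-\hat P(s'|s,a))x_{s'}$. *)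

(* Defs.v *)
From HB Require Import structures.
From mathcomp Require Import all_boot all_order all_algebra.
From mathcomp Require Import all_classical all_reals all_analysis.
Set Implicit Arguments. Unset Strict Implicit. Unset Printing Implicit Defensive.
Import Order.TTheory GRing.Theory Num.Theory.
Local Open Scope classical_set_scope.
Local Open Scope ring_scope.

Section SSPDefs.
Variables (R : realType) (S Act : finType).

Definition nonneg_vec (p : S -> R) : Prop := forall s, 0 <= p s.

Definition subdist (p : S -> R) : Prop := nonneg_vec p /\ \sum_(s' : S) p s' <= 1.

Definition jointly_convex (D : (S -> R) -> (S -> R) -> R) : Prop :=
  forall (p1 p1' p2 p2' : S -> R) (t : R),
    nonneg_vec p1 -> nonneg_vec p1' -> nonneg_vec p2 -> nonneg_vec p2' ->
    0 <= t -> t <= 1 ->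
    D (fun s => t * p1 s + (1 - t) * p2 s) (fun s => t * p1' s + (1 - t) * p2' s)
      <= t * D p1 p1' + (1 - t) * D p2 p2'.

Definition pos_homogeneous (D : (S -> R) -> (S -> R) -> R) : Prop :=
  forall (alpha : R) (p p' : S -> R), 0 <= alpha -> nonneg_vec p -> nonneg_vec p' ->
    D (fun s => alpha * p s) (fun s => alpha * p' s) = alpha * D p p'.

Variables (A : S -> {set Act}) (c : S -> Act -> R) (Phat : S -> Act -> S -> R)
  (D : (S -> R) -> (S -> R) -> R) (eps : S -> Act -> R).

Definition Peps (s : S) (a : Act) : set (S -> R) :=
  [set p | subdist p /\ D p (Phat s a) <= eps s a].

(* CB_min(s,a)(x): the minimum, taken as the infimum *)
Definition CBmin (s : S) (a : Act) (x : S -> R) : R :=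
  inf [set \sum_(s' : S) (p s' - Phat s a s') * x s' | p in Peps s a].

Definition occupancy_feasible (P : S -> Act -> S -> R) (q : S -> Act -> R) : Prop :=
  (forall s a, a \in A s -> 0 <= q s a) /\
  (forall s, \sum_(a in A s) q s a
             = 1 + \sum_(s' : S) \sum_(a in A s') q s' a * P s' a s).

Definition LP_feasible : Prop := exists q, occupancy_feasible Phat q.

Definition feasA : set (S -> R) :=
  [set x | forall s a, a \in A s ->
     x s <= c s a + \sum_(s' : S) Phat s a s' * x s' + CBmin s a x].

Definition valueA : \bar R :=
  ereal_sup [set (\sum_(s : S) x s)%:E | x in feasA].

Definition feasB : set ((S -> Act -> R) * (S -> Act -> S -> R)) :=
  [set qP | (forall s a, a \in A s -> Peps s a (qP.2 s a)) /\
            occupancy_feasible qP.2 qP.1].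

Definition valueB : \bar R :=
  ereal_inf [set (\sum_(s : S) \sum_(a in A s) qP.1 s a * c s a)%:E | qP in feasB].

End SSPDefs.

(* Main.v *)
Require Import Defs.
From HB Require Import structures.
From mathcomp Require Import all_boot all_order all_algebra.
From mathcomp Require Import all_classical all_reals all_analysis.
From mathcomp Require Import ring lra.
Set Implicit Arguments. Unset Strict Implicit.
Import Order.TTheory GRing.Theory Num.Theory.
Local Open Scope classical_set_scope.
Local Open Scope ring_scope.

Section Gen.
Variables (R : realType) (S : finType).

Lemma dec_mono (u : nat -> S -> R) : (forall k s, u k.+1 s <= u k s) ->
  forall j k s, (j <= k)%N -> u k s <= u j s.
Proof.
move=> hu j k s /subnK <-; elim: (k - j)%N => [|m IH]; first by rewrite add0n.
by rewrite addSn (le_trans (hu _ _)).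
Qed.

Lemma dec_lim (u : nat -> S -> R) (B : R) : (forall k s, u k.+1 s <= u k s) ->
  (forall k s, B <= u k s) ->
  exists L : S -> R, (forall k s, L s <= u k s) /\
    (forall e, 0 < e -> exists k, forall s, u k s <= L s + e) /\ (forall s, B <= L s).
Proof.
move=> hu hB.
pose L s := inf (range (fun k => u k s)).
have hinf s : has_inf (range (fun k => u k s)).
  split; first by exists (u 0%N s), 0%N.
  by exists B => _ [k _ <-].
have hlb s : has_lbound (range (fun k => u k s)) by case: (hinf s).
exists L; split; [|split].
- by move=> k s; apply: ge_inf => //; exists k.
- move=> e e0.
  have: forall s, exists k, u k s <= L s + e.
    move=> s; have [_ [k _ <-] hk] := inf_adherent e0 (hinf s).
    by exists k; apply: ltW.
  move=> /boolp.choice [kf hkf].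
  exists (\max_(s : S) kf s)%N => s.
  apply: le_trans (hkf s); apply: dec_mono => //.
  by apply: (leq_bigmax_cond s).
- move=> s; apply: lb_le_inf; first by exists (u 0%N s), 0%N.
  by move=> _ [k _ <-].
Qed.

Lemma inc_lim (u : nat -> S -> R) (B : R) : (forall k s, u k s <= u k.+1 s) ->
  (forall k s, u k s <= B) ->
  exists L : S -> R, (forall k s, u k s <= L s) /\
    (forall e, 0 < e -> exists k, forall s, L s <= u k s + e) /\ (forall s, L s <= B).
Proof.
move=> hu hB.
have [L [h1 [h2 h3]]] := @dec_lim (fun k s => - u k s) (- B)
  (fun k s => ltac:(by rewrite lerN2)) (fun k s => ltac:(by rewrite lerN2)).
exists (fun s => - L s); split; [|split].
- by move=> k s; rewrite lerNr.
- move=> e e0; have [k hk] := h2 e e0; exists k => s.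
  by have := hk s; lra.
- by move=> s; rewrite lerNl.
Qed.

Lemma sum_ge_term (F : S -> R) s0 : (forall s, 0 <= F s) -> F s0 <= \sum_s F s.
Proof.
move=> h; rewrite (bigD1 s0) //= lerDl; apply: sumr_ge0 => *; exact: h.
Qed.

End Gen.

Section Gen2.
Variables (R : realType) (S : finType).

Lemma le_eps_C (x y C : R) : 0 <= C -> (forall e, 0 < e -> x <= y + e * C) -> x <= y.
Proof.
move=> C0 h; apply/ler_addgt0Pr => e e0.
have C1 : 0 < C + 1 by lra.
have e1 : 0 < e / (C + 1) by rewrite divr_gt0.
apply: (le_trans (h _ e1)); rewrite lerD2l.
rewrite -mulrA ler_piMr //; first by lra.
rewrite ler_pdivrMl //; lra.
Qed.

Lemma sum_identity (K : S -> S -> R) (w v : S -> R) :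
  (forall s, w s = 1 + \sum_s' K s' s * w s') ->
  \sum_s w s * (v s - \sum_s' K s s' * v s') = \sum_s v s.
Proof.
move=> hw.
have E : \sum_s w s * (v s - \sum_s' K s s' * v s') =
   \sum_s w s * v s - \sum_s' v s' * (\sum_s K s s' * w s).
  under eq_bigr do rewrite mulrBr.
  rewrite sumrB; congr (_ - _).
  under eq_bigr do rewrite mulr_sumr.
  rewrite exchange_big /=; apply: eq_bigr => s' _.
  rewrite mulr_sumr; apply: eq_bigr => s _; ring.
rewrite E -sumrB; apply: eq_bigr => s _.
rewrite (hw s) -(hw s); have := hw s.
suff -> : \sum_s0 K s0 s * w s0 = w s - 1 by move=> _; ring.
by rewrite (hw s); ring.
Qed.

Lemma lin_solve (K : S -> S -> R) (w f : S -> R) :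
  (forall s s', 0 <= K s s') -> (forall s, 0 <= w s) ->
  (forall s, w s = 1 + \sum_s' K s' s * w s') -> (forall s, 0 <= f s) ->
  exists v : S -> R, (forall s, 0 <= v s) /\
    (forall s, v s = f s + \sum_s' K s s' * v s').
Proof.
move=> K0 w0 hw f0.
pose step (v : S -> R) := fun s => f s + \sum_s' K s s' * v s'.
pose vi k := iter k step (fun _ => 0).
have viS k s : vi k.+1 s = f s + \sum_s' K s s' * vi k s' by [].
have vi0 k s : 0 <= vi k s.
  elim: k s => [|k IH] s //=; rewrite /step addr_ge0 //.
  by apply: sumr_ge0 => s' _; rewrite mulr_ge0.
have vinc k s : vi k s <= vi k.+1 s.
  elim: k s => [|k IH] s; first by rewrite viS /= big1 ?addr0 // => *; rewrite mulr0.
  rewrite (viS k.+1) (viS k) lerD2l; apply: ler_sum => s' _.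
  by rewrite ler_wpM2l.
pose Bd := \sum_s w s * f s.
have vbd k s : vi k s <= Bd.
  apply: (le_trans (sum_ge_term s (vi0 k))).
  rewrite -(sum_identity (vi k) hw); apply: ler_sum => s' _.
  rewrite ler_wpM2l //.
  have := vinc k s'; rewrite viS; lra.
have [L [hL1 [hL2 hL3]]] := inc_lim vinc vbd.
have C0 s : 0 <= \sum_s' K s s' by apply: sumr_ge0.
exists L; split; first by move=> s; apply: le_trans (hL1 0%N s).
move=> s; apply/eqP; rewrite eq_le; apply/andP; split.
- apply: (@le_eps_C _ _ 1) => // e e0.
  have [k hk] := hL2 e e0.
  apply: le_trans (hk s) _; rewrite mulr1 lerD2r.
  case: k {hk} => [|k]; first by rewrite /= addr_ge0 //; apply: sumr_ge0 => s' _; rewrite mulr_ge0 // (le_trans (vi0 0%N s')).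
  rewrite viS lerD2l; apply: ler_sum => s' _; by rewrite ler_wpM2l.
- apply: (@le_eps_C _ _ (\sum_s' K s s')) => // e e0.
  have [k hk] := hL2 e e0.
  apply: le_trans (_ : vi k.+1 s + e * \sum_s' K s s' <= _); last by rewrite lerD2r.
  rewrite viS -addrA lerD2l mulr_sumr -big_split /=; apply: ler_sum => s' _.
  have := hk s'; have := K0 s s'; nra.
Qed.

End Gen2.

Section Gen3.
Variables (R : realType) (S Act : finType).

Lemma dual_id (K : S -> S -> R) (nu mu f J : S -> R) :
  (forall s, nu s = mu s + \sum_s' K s' s * nu s') ->
  (forall s, J s = f s + \sum_s' K s s' * J s') ->
  \sum_s nu s * f s = \sum_s mu s * J s.
Proof.
move=> hnu hJ.
have E : \sum_s mu s * J s = \sum_s nu s * J s - \sum_s' nu s' * \sum_s K s' s * J s.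
  have E1 : \sum_s mu s * J s = \sum_s nu s * J s - \sum_s (\sum_s' K s' s * nu s') * J s.
    rewrite -sumrB; apply: eq_bigr => s _; rewrite (hnu s); ring.
  rewrite E1; congr (_ - _).
  under eq_bigr do rewrite mulr_suml.
  rewrite exchange_big /=; apply: eq_bigr => s' _; rewrite mulr_sumr.
  by apply: eq_bigr => s _; ring.
rewrite E -sumrB; apply: eq_bigr => s _; rewrite (hJ s); ring.
Qed.

Lemma sum_if (B : {set Act}) (b : Act) (F : Act -> R) : b \in B ->
  \sum_(a in B) (if b == a then F a else 0) = F b.
Proof.
move=> hb; rewrite (bigD1 b) //= eqxx big1 ?addr0 // => a /andP[_ hab].
by rewrite eq_sym (negbTE hab).
Qed.

End Gen3.

Section Main.
Variables (R : realType) (S Act : finType) (A : S -> {set Act})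
  (c : S -> Act -> R) (Phat : S -> Act -> S -> R)
  (D : (S -> R) -> (S -> R) -> R) (eps : S -> Act -> R).
Hypotheses (hc : forall s a, 0 <= c s a /\ c s a <= 1)
  (hP : forall s a, subdist (Phat s a))
  (hD0 : forall p p', nonneg_vec p -> nonneg_vec p' -> 0 <= D p p')
  (hconv : jointly_convex D)
  (hDpp : forall p, nonneg_vec p -> D p p = 0)
  (hhom : pos_homogeneous D)
  (heps : forall s a, 0 < eps s a).

Let Pe := Peps Phat D eps.
Let CB := CBmin Phat D eps.

Lemma Phat_in s a : Pe s a (Phat s a).
Proof.
split; first exact: hP.
by rewrite hDpp; [exact: ltW | case: (hP s a)].
Qed.

Lemma sub_bounds (p : S -> R) s' : subdist p -> 0 <= p s' /\ p s' <= 1.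
Proof.
move=> [h0 h1]; split => //; apply: le_trans h1; exact: sum_ge_term.
Qed.

Lemma term_lb (a b x : R) : 0 <= a <= 1 -> 0 <= b <= 1 -> - `|x| <= (a - b) * x.
Proof.
move=> /andP[a0 a1] /andP[b0 b1].
case: (lerP 0 x) => hx.
- rewrite ger0_norm //; nra.
- rewrite ltr0_norm //; nra.
Qed.

Let CBset s a x := [set \sum_(s' : S) (p s' - Phat s a s') * x s' | p in Pe s a].

Lemma CB_hasinf s a x : has_inf (CBset s a x).
Proof.
split; first by exists (\sum_(s' : S) (Phat s a s' - Phat s a s') * x s'), (Phat s a); first exact: Phat_in.
exists (- \sum_s' `|x s'|) => _ [p [hp _] <-].
rewrite -sumrN; apply: ler_sum => s' _; apply: term_lb.
- by have [? ?] := sub_bounds s' hp; apply/andP.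
- by have [? ?] := sub_bounds s' (hP s a); apply/andP.
Qed.

Lemma CB_lb s a x p : Pe s a p -> CB s a x <= \sum_(s' : S) (p s' - Phat s a s') * x s'.
Proof.
move=> hp; apply: ge_inf; first by case: (CB_hasinf s a x).
by exists p.
Qed.

Lemma CB_adh s a x e : 0 < e -> exists2 p, Pe s a p &
   \sum_(s' : S) (p s' - Phat s a s') * x s' < CB s a x + e.
Proof.
move=> e0; have [_ [p hp <-] h] := inf_adherent e0 (CB_hasinf s a x).
by exists p.
Qed.

Definition Hq s a x := \sum_(s' : S) Phat s a s' * x s' + CB s a x.

Lemma sum_diff (p q x : S -> R) :
  \sum_(s' : S) (p s' - q s') * x s' = \sum_s' p s' * x s' - \sum_s' q s' * x s'.
Proof. by rewrite -sumrB; apply: eq_bigr => s' _; ring. Qed.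

Lemma H1 s a x p : Pe s a p -> Hq s a x <= \sum_s' p s' * x s'.
Proof. by move=> /(CB_lb x); rewrite /Hq sum_diff; lra. Qed.

Lemma H2 s a x e : 0 < e -> exists2 p, Pe s a p & \sum_s' p s' * x s' < Hq s a x + e.
Proof.
move=> /(CB_adh s a x) [p hp]; rewrite sum_diff /Hq => h.
by exists p => //; lra.
Qed.

Lemma Hq_mono s a (x y : S -> R) e : 0 <= e -> (forall s', x s' <= y s' + e) ->
  Hq s a x <= Hq s a y + e.
Proof.
move=> e0 hxy; apply/ler_addgt0Pr => d d0.
have [p hp hlt] := H2 s a y d0.
apply: (le_trans (H1 x hp)).
have hsum : \sum_s' p s' * x s' <= \sum_s' p s' * y s' + e.
  apply: (@le_trans _ _ (\sum_s' p s' * (y s' + e))).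
    apply: ler_sum => s' _; rewrite ler_wpM2l //; by case: (sub_bounds s' hp.1).
  under eq_bigr do rewrite mulrDr.
  rewrite big_split /= lerD2l -mulr_suml; apply: ler_piMl => //.
  exact: hp.1.2.
lra.
Qed.


Lemma Hq_ge0 s a x : (forall s', 0 <= x s') -> 0 <= Hq s a x.
Proof.
move=> x0; apply/ler_addgt0Pr => d d0.
have [p hp hlt] := H2 s a x d0.
have : 0 <= \sum_s' p s' * x s'.
  apply: sumr_ge0 => s' _; rewrite mulr_ge0 //; by case: (sub_bounds s' hp.1).
lra.
Qed.

Definition G s a x := c s a + \sum_(s' : S) Phat s a s' * x s' + CBmin Phat D eps s a x.

Lemma G_Hq s a x : G s a x = c s a + Hq s a x.
Proof. by rewrite /G /Hq addrA. Qed.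

Hypothesis hA : forall s, exists a, a \in A s.

Definition Gset s x := [set G s a x | a in (fun a => a \in A s)].
Definition T (x : S -> R) s := inf (Gset s x).

Lemma T_hasinf x s : has_inf (Gset s x).
Proof.
split; first by have [a ha] := hA s; exists (G s a x), a.
exists (- \sum_a `|G s a x|) => _ [a _ <-].
rewrite lerNl; apply: le_trans (ler_norm _) _; rewrite normrN.
by apply: (@sum_ge_term _ _ (fun a => `|G s a x|)) => *.
Qed.

Lemma T1 x s a : a \in A s -> T x s <= G s a x.
Proof.
move=> ha; apply: ge_inf; first by case: (T_hasinf x s).
by exists a.
Qed.

Lemma T2 x s e : 0 < e -> exists2 a, a \in A s & G s a x < T x s + e.
Proof.
move=> e0; have [_ [a ha <-] h] := inf_adherent e0 (T_hasinf x s).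
by exists a.
Qed.

Lemma T_mono (x y : S -> R) e s : 0 <= e -> (forall s', x s' <= y s' + e) ->
  T x s <= T y s + e.
Proof.
move=> e0 hxy; apply/ler_addgt0Pr => d d0.
have [a ha hlt] := T2 y s d0.
apply: (le_trans (T1 x ha)).
have := Hq_mono s a e0 hxy; move: hlt; rewrite !G_Hq; lra.
Qed.

Lemma T_ge0 (x : S -> R) s : (forall s', 0 <= x s') -> 0 <= T x s.
Proof.
move=> x0; apply/ler_addgt0Pr => d d0.
have [a ha hlt] := T2 x s d0.
have := Hq_ge0 s a x0; have := (hc s a).1; move: hlt; rewrite G_Hq; lra.
Qed.


Lemma weak x q P : feasA A c Phat D eps x -> feasB A Phat D eps (q, P) ->
  \sum_s x s <= \sum_(s : S) \sum_(a in A s) q s a * c s a.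
Proof.
move=> hx [/= hPe [q0 hflow]].
have hle s a : a \in A s -> x s - \sum_s' P s a s' * x s' <= c s a.
  move=> ha; have := hx s a ha; have := H1 x (hPe s a ha).
  rewrite /Hq /CB; lra.
have E : \sum_s \sum_(a in A s) q s a * (x s - \sum_s' P s a s' * x s') = \sum_s x s.
  have E1 : \sum_s \sum_(a in A s) q s a * (x s - \sum_s' P s a s' * x s') =
     \sum_s x s * \sum_(a in A s) q s a -
     \sum_s \sum_(a in A s) \sum_s' q s a * P s a s' * x s'.
    rewrite -sumrB; apply: eq_bigr => s _.
    rewrite mulr_sumr -sumrB; apply: eq_bigr => a _.
    rewrite mulrBr mulrC; congr (_ - _); rewrite mulr_sumr.
    by apply: eq_bigr => s' _; ring.
  have E2 : \sum_s \sum_(a in A s) \sum_s' q s a * P s a s' * x s' =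
     \sum_s' x s' * \sum_s \sum_(a in A s) q s a * P s a s'.
    under eq_bigr do rewrite exchange_big /=.
    rewrite exchange_big /=; apply: eq_bigr => s' _.
    rewrite mulr_sumr; apply: eq_bigr => s _; rewrite mulr_sumr.
    by apply: eq_bigr => a _; ring.
  rewrite E1 E2 -sumrB; apply: eq_bigr => s _.
  rewrite (hflow s); ring.
rewrite -E; apply: ler_sum => s _; apply: ler_sum => a ha.
by rewrite ler_wpM2l // ?q0 // hle.
Qed.


Definition Cn s a (W : R) (v : S -> R) :=
  [/\ 0 <= W, nonneg_vec v, \sum_s' v s' <= W & D v (fun s' => W * Phat s a s') <= W * eps s a].

Lemma Cn_ext s a W W' (v v' : S -> R) : W = W' -> (forall s', v s' = v' s') ->
  Cn s a W v -> Cn s a W' v'.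
Proof. by move=> <- /boolp.funext <-. Qed.

Lemma Cn_of_Pe s a p al : 0 <= al -> Pe s a p -> Cn s a al (fun s' => al * p s').
Proof.
move=> al0 [[p0 p1] hD]; split => //.
- by move=> s'; rewrite mulr_ge0.
- by rewrite -mulr_sumr; apply: ler_piMr.
- rewrite hhom //; first by rewrite ler_wpM2l.
  by case: (hP s a).
Qed.

Lemma Cn_0 s a : Cn s a 0 (fun _ => 0).
Proof.
apply: (@Cn_ext _ _ _ _ (fun s' => 0 * Phat s a s')) => //; last first.
  by apply: Cn_of_Pe => //; exact: Phat_in.
by move=> s'; rewrite mul0r.
Qed.

Lemma Cn_add s a W1 W2 v1 v2 : Cn s a W1 v1 -> Cn s a W2 v2 ->
  Cn s a (W1 + W2) (fun s' => v1 s' + v2 s').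
Proof.
move=> [W10 v10 s1 D1] [W20 v20 s2 D2]; split.
- by rewrite addr_ge0.
- by move=> s'; rewrite addr_ge0.
- by rewrite big_split /= lerD.
have nP : nonneg_vec (Phat s a) by case: (hP s a).
have nW1 : nonneg_vec (fun s' => W1 * Phat s a s') by move=> s'; rewrite mulr_ge0.
have nW2 : nonneg_vec (fun s' => W2 * Phat s a s') by move=> s'; rewrite mulr_ge0.
have E1 : (fun s' => v1 s' + v2 s') =
   (fun s' => 2 * (2^-1 * v1 s' + (1 - 2^-1) * v2 s')).
  by apply: boolp.funext => s'; field.
have E2 : (fun s' => (W1 + W2) * Phat s a s') =
   (fun s' => 2 * (2^-1 * (W1 * Phat s a s') + (1 - 2^-1) * (W2 * Phat s a s'))).
  by apply: boolp.funext => s'; field.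
rewrite E1 E2 hhom //; last 2 first.
- by move=> s'; rewrite addr_ge0 // mulr_ge0 // ?subr_ge0 ?invf_le1 //; lra.
- by move=> s'; rewrite addr_ge0 // mulr_ge0 // ?subr_ge0 ?invf_le1 // ?mulr_ge0 //; lra.
have h1 : (0 : R) <= 2^-1 by rewrite invr_ge0.
have h2 : (2^-1 : R) <= 1 by rewrite invf_le1 //; lra.
have h := @hconv v1 _ v2 _ (2^-1) v10 nW1 v20 nW2 h1 h2.
have h3 : (2 : R) * 2^-1 = 1 by field.
have : 2 * D (fun s' => 2^-1 * v1 s' + (1 - 2^-1) * v2 s')
      (fun s' => 2^-1 * (W1 * Phat s a s') + (1 - 2^-1) * (W2 * Phat s a s'))
   <= D v1 (fun s' => W1 * Phat s a s') + D v2 (fun s' => W2 * Phat s a s').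
  apply: le_trans (_ : 2 * (2^-1 * D v1 (fun s' => W1 * Phat s a s') +
     (1 - 2^-1) * D v2 (fun s' => W2 * Phat s a s')) <= _).
    by rewrite ler_wpM2l.
  have -> : forall d1 d2 : R, 2 * (2^-1 * d1 + (1 - 2^-1) * d2) = d1 + d2.
    by move=> d1 d2; field.
  by [].
move=> h4; apply: (le_trans h4); rewrite mulrDl; exact: lerD.
Qed.

Lemma Cn_sum s a (F : nat -> R) (V : nat -> S -> R) n :
  (forall i, (i < n)%N -> Cn s a (F i) (V i)) ->
  Cn s a (\sum_(0 <= i < n) F i) (fun s' => \sum_(0 <= i < n) V i s').
Proof.
elim: n => [|n IH] h.
  apply: (@Cn_ext _ _ 0 _ (fun _ => 0)); first by rewrite big_geq.
    by move=> s'; rewrite big_geq.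
  exact: Cn_0.
apply: (@Cn_ext _ _ _ _ (fun s' => \sum_(0 <= i < n) V i s' + V n s')).
- by rewrite big_nat_recr.
- by move=> s'; rewrite big_nat_recr.
apply: Cn_add; last exact: h.
by apply: IH => i hi; apply: h; apply: ltnW.
Qed.

Lemma Cn_extract s a W v : Cn s a W v -> 0 < W -> Pe s a (fun s' => v s' / W).
Proof.
move=> [W0 v0 s1 hD] Wp; split; first split.
- by move=> s'; rewrite divr_ge0.
- by rewrite -mulr_suml ler_pdivrMr // mul1r.
have nP : nonneg_vec (Phat s a) by case: (hP s a).
have E1 : (fun s' => v s' / W) = (fun s' => W^-1 * v s').
  by apply: boolp.funext => s'; rewrite mulrC.
have E2 : Phat s a = (fun s' => W^-1 * (W * Phat s a s')).
  by apply: boolp.funext => s'; field; rewrite gt_eqF.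
rewrite E1 E2 hhom //; last 2 first.
- by rewrite invr_ge0.
- by move=> s'; rewrite mulr_ge0.
rewrite ler_pdivrMl //.
Qed.

Lemma Cn_zero s a v : Cn s a 0 v -> forall s', v s' = 0.
Proof.
move=> [_ v0 s1 _] s'; apply/eqP; rewrite eq_le v0 andbT.
by apply: le_trans s1; exact: sum_ge_term.
Qed.

Definition Pt (q : S -> Act -> R) (w : S -> Act -> S -> R) s a :=
  if 0 < q s a then (fun s' => w s a s' / q s a) else Phat s a.

Lemma feasB_of (q : S -> Act -> R) (w : S -> Act -> S -> R) :
  (forall s a, a \in A s -> Cn s a (q s a) (w s a)) ->
  (forall s, \sum_(a in A s) q s a = 1 + \sum_s' \sum_(a in A s') w s' a s) ->
  feasB A Phat D eps (q, Pt q w).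
Proof.
move=> hC hf; split; [|split] => /=.
- move=> s a ha; rewrite /Pt; case: ifP => hq; first by apply: Cn_extract; [exact: hC|].
  exact: Phat_in.
- by move=> s a ha; case: (hC s a ha).
- move=> s; rewrite hf; congr (_ + _); apply: eq_bigr => s' _; apply: eq_bigr => a ha.
  rewrite /Pt; case: ifP => hq; first by field; rewrite gt_eqF.
  have q0 : q s' a = 0 by case: (hC s' a ha) => q0 _ _ _; apply/eqP; rewrite eq_le q0 leNgt hq.
  have := hC s' a ha; rewrite q0 => /Cn_zero ->; by rewrite mul0r.
Qed.


Variable q0 : S -> Act -> R.
Hypothesis hq0 : occupancy_feasible A Phat q0.

Definition nu0 s := \sum_(a in A s) q0 s a.

Lemma q0_ge0 s a : a \in A s -> 0 <= q0 s a.
Proof. by case: hq0 => h _; apply: h. Qed.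

Lemma nu0_ge1 s : 1 <= nu0 s.
Proof.
rewrite /nu0 (hq0.2 s) lerDl; apply: sumr_ge0 => s' _; apply: sumr_ge0 => a ha.
by rewrite mulr_ge0 ?q0_ge0 //; case: (sub_bounds s (hP s' a)).
Qed.

Lemma nu0_gt0 s : 0 < nu0 s.
Proof. exact: lt_le_trans ltr01 (nu0_ge1 s). Qed.

Definition pi s a := q0 s a / nu0 s.

Lemma pi_ge0 s a : a \in A s -> 0 <= pi s a.
Proof. by move=> ha; rewrite divr_ge0 ?q0_ge0 // ltW // nu0_gt0. Qed.

Lemma sum_pi s : \sum_(a in A s) pi s a = 1.
Proof. by rewrite -mulr_suml divff // gt_eqF // nu0_gt0. Qed.

Definition Kp s s' := \sum_(a in A s) pi s a * Phat s a s'.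

Lemma Kp_ge0 s s' : 0 <= Kp s s'.
Proof.
apply: sumr_ge0 => a ha; rewrite mulr_ge0 ?pi_ge0 //.
by case: (sub_bounds s' (hP s a)).
Qed.

Lemma nu0_eq s : nu0 s = 1 + \sum_s' Kp s' s * nu0 s'.
Proof.
rewrite {1}/nu0 (hq0.2 s); congr (_ + _); apply: eq_bigr => s' _.
rewrite /Kp mulr_suml; apply: eq_bigr => a _; rewrite /pi.
have := nu0_gt0 s'; rewrite lt0r => /andP[hn _].
by field.
Qed.

Definition cpi s := \sum_(a in A s) pi s a * c s a.

Lemma cpi_ge0 s : 0 <= cpi s.
Proof. apply: sumr_ge0 => a ha; rewrite mulr_ge0 ?pi_ge0 //; exact: (hc s a).1. Qed.

Variables (J w1 : S -> R).
Hypotheses (hJ0 : forall s, 0 <= J s) (hJ : forall s, J s = cpi s + \sum_s' Kp s s' * J s')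
  (hw10 : forall s, 0 <= w1 s) (hw1 : forall s, w1 s = 1 + \sum_s' Kp s s' * w1 s').

Lemma tail mu : (forall s, 0 <= mu s) -> exists2 nu : S -> R, (forall s, 0 <= nu s) &
  (forall s, nu s = mu s + \sum_s' Kp s' s * nu s').
Proof.
move=> mu0.
have [nu [h1 h2]] := @lin_solve R S (fun s s' => Kp s' s) w1 mu
  (fun s s' => Kp_ge0 s' s) hw10 hw1 mu0.
by exists nu.
Qed.

Lemma TJ_le s : T J s <= J s.
Proof.
rewrite [leRHS](hJ s) /cpi /Kp.
have -> : \sum_s' (\sum_(a in A s) pi s a * Phat s a s') * J s' =
          \sum_(a in A s) pi s a * \sum_s' Phat s a s' * J s'.
  under eq_bigr do rewrite mulr_suml.
  rewrite exchange_big /=; apply: eq_bigr => a _; rewrite mulr_sumr.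
  by apply: eq_bigr => s' _; ring.
rewrite -big_split /=.
rewrite -[T J s]mul1r -(sum_pi s) mulr_suml; apply: ler_sum => a ha.
rewrite -mulrDr ler_wpM2l ?pi_ge0 //.
apply: (le_trans (T1 J ha)); rewrite G_Hq lerD2l.
have hh := H1 J (Phat_in s a). exact: hh.
Qed.

Definition Jk k := iter k T J.

Lemma Jk_ge0 k s : 0 <= Jk k s.
Proof. elim: k s => [|k IH] s /=; first exact: hJ0. exact: T_ge0. Qed.

Lemma Jk_dec k s : Jk k.+1 s <= Jk k s.
Proof.
elim: k s => [|k IH] s; first exact: TJ_le.
rewrite -[Jk k.+1 s]addr0.
apply: (T_mono s (lexx 0)) => s'; rewrite addr0; exact: IH.
Qed.


Fixpoint mu (p : nat -> S -> S -> R) (n t : nat) : S -> R :=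
  match t with
  | 0 => fun _ => 1
  | t'.+1 => fun s => \sum_s' mu p n t' s' * p (n - t'.+1)%N s' s
  end.

Lemma if_mul (b : bool) (x y : R) : (if b then x else 0) * y = if b then x * y else 0.
Proof. by case: b => //; rewrite mul0r. Qed.

Lemma construct n dl : 0 < dl -> exists q w,
  [/\ (forall s a, a \in A s -> Cn s a (q s a) (w s a)),
      (forall s, \sum_(a in A s) q s a = 1 + \sum_s' \sum_(a in A s') w s' a s) &
      \sum_s \sum_(a in A s) q s a * c s a <=
        \sum_s Jk n s + dl * n%:R * \sum_(s : S) (1 : R)].
Proof.
move=> dl0.
have : forall ks : nat * S, exists ap : Act * (S -> R),
   [/\ ap.1 \in A ks.2, Pe ks.2 ap.1 ap.2 &
     c ks.2 ap.1 + \sum_s' ap.2 s' * Jk ks.1 s' <= Jk ks.1.+1 ks.2 + dl].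
  case=> k s /=.
  have dl2 : 0 < dl / 2 by rewrite divr_gt0.
  have [a ha ha2] := T2 (Jk k) s dl2.
  have [p hp hp2] := H2 s a (Jk k) dl2.
  exists (a, p); split => //=.
  move: ha2 hp2; rewrite G_Hq /Jk /= => ha2 hp2.
  lra.
move=> /boolp.choice [ch hch].
pose h k s := (ch (k, s)).1.
pose p k s := (ch (k, s)).2.
have hA' k s : h k s \in A s by case: (hch (k, s)).
have hPe k s : Pe s (h k s) (p k s) by case: (hch (k, s)).
have hdec k s : c s (h k s) + \sum_s' p k s s' * Jk k s' <= Jk k.+1 s + dl.
  by case: (hch (k, s)).
have pnn k s s' : 0 <= p k s s' by case: (sub_bounds s' (hPe k s).1).
have psum k s : \sum_s' p k s s' <= 1 by exact: (hPe k s).1.2.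
pose m := mu p n.
have mS t s : m t.+1 s = \sum_s' m t s' * p (n - t.+1)%N s' s by [].
have m0 t s : 0 <= m t s.
  elim: t s => [|t IH] s; first by rewrite /m /= ler01.
  by rewrite mS; apply: sumr_ge0 => s' _; rewrite mulr_ge0.
pose N := \sum_(s : S) (1 : R).
have msum t : \sum_s m t s <= N.
  elim: t => [|t IH]; first by [].
  apply: le_trans IH.
  under eq_bigr do rewrite mS.
  rewrite exchange_big /=; apply: ler_sum => s' _.
  rewrite -mulr_sumr; apply: ler_piMr => //; exact: psum.
have [nu nu0' hnu] := tail (m0 n).
pose qN s a := \sum_(0 <= t < n) (if h (n - t.+1)%N s == a then m t s else 0).
pose wN s a s' := \sum_(0 <= t < n)
   (if h (n - t.+1)%N s == a then m t s * p (n - t.+1)%N s s' else 0).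
exists (fun s a => qN s a + pi s a * nu s),
       (fun s a s' => wN s a s' + pi s a * nu s * Phat s a s').
split.
- move=> s a ha; apply: Cn_add.
  + apply: (@Cn_sum s a (fun t => if h (n - t.+1)%N s == a then m t s else 0)
       (fun t s' => if h (n - t.+1)%N s == a then m t s * p (n - t.+1)%N s s' else 0)).
    move=> t _; case: eqP => [e|_]; last exact: Cn_0.
    apply: Cn_of_Pe; first exact: m0.
    rewrite -e; exact: hPe.
  + apply: Cn_of_Pe; last exact: Phat_in.
    by rewrite mulr_ge0 ?pi_ge0.
- move=> s; rewrite big_split /=.
  have EqN : \sum_(a in A s) qN s a = \sum_(0 <= t < n) m t s.
    rewrite /qN exchange_big /=; apply: eq_bigr => t _.
    exact: (sum_if (fun _ => m t s) (hA' _ s)).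
  have EqT : \sum_(a in A s) pi s a * nu s = nu s by rewrite -mulr_suml sum_pi mul1r.
  have EwN : \sum_s' \sum_(a in A s') wN s' a s = \sum_(0 <= t < n) m t.+1 s.
    have -> : \sum_s' \sum_(a in A s') wN s' a s =
       \sum_s' \sum_(0 <= t < n) m t s' * p (n - t.+1)%N s' s.
      apply: eq_bigr => s' _; rewrite /wN exchange_big /=; apply: eq_bigr => t _.
      exact: (sum_if (fun _ => m t s' * p (n - t.+1)%N s' s) (hA' _ s')).
    by rewrite exchange_big /=.
  have EwT : \sum_s' \sum_(a in A s') pi s' a * nu s' * Phat s' a s =
      \sum_s' Kp s' s * nu s'.
    apply: eq_bigr => s' _; rewrite /Kp mulr_suml; apply: eq_bigr => a _; ring.
  under [in RHS]eq_bigr do rewrite big_split /=.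
  rewrite big_split /= EqN EqT EwN EwT (hnu s).
  have E1 : \sum_(0 <= i < n.+1) m i s = \sum_(0 <= i < n) m i s + m n s.
    by rewrite big_nat_recr.
  have E2 : \sum_(0 <= i < n.+1) m i s = m 0%N s + \sum_(0 <= i < n) m i.+1 s.
    by rewrite big_nat_recl.
  have E3 : m 0%N s = 1 by [].
  lra.
- have EcN s : \sum_(a in A s) qN s a * c s a =
      \sum_(0 <= t < n) m t s * c s (h (n - t.+1)%N s).
    rewrite /qN; under eq_bigr do rewrite mulr_suml.
    rewrite exchange_big /=; apply: eq_bigr => t _.
    under eq_bigr do rewrite if_mul.
    exact: (sum_if (fun a => m t s * c s a) (hA' _ s)).
  have EcT s : \sum_(a in A s) pi s a * nu s * c s a = nu s * cpi s.
    rewrite /cpi mulr_sumr; apply: eq_bigr => a _; ring.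
  have -> : \sum_s \sum_(a in A s) (qN s a + pi s a * nu s) * c s a =
      \sum_s (\sum_(0 <= t < n) m t s * c s (h (n - t.+1)%N s) + nu s * cpi s).
    apply: eq_bigr => s _; rewrite -EcN -EcT -big_split /=.
    by apply: eq_bigr => a _; ring.
  rewrite big_split /= exchange_big /= (dual_id hnu hJ).
  have tele t : (t <= n)%N -> \sum_(0 <= i < t) \sum_s m i s * c s (h (n - i.+1)%N s) +
      \sum_s m t s * Jk (n - t) s <= \sum_s Jk n s + dl * t%:R * N.
    elim: t => [|t IH] ht.
      rewrite big_geq // add0r subn0 mulr0n mulr0 mul0r addr0.
      by rewrite le_eqVlt; apply/orP; left; apply/eqP; apply: eq_bigr => s _; rewrite /m /= mul1r.
    have IH' := IH (ltnW ht).
    have hk : (n - t)%N = (n - t.+1)%N.+1 by rewrite subnSK.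
    rewrite hk in IH'.
    rewrite big_nat_recr //=.
    set k := (n - t.+1)%N in IH' *.
    have E : \sum_s m t.+1 s * Jk k s = \sum_s' m t s' * \sum_s p k s' s * Jk k s.
      under eq_bigr do rewrite mS mulr_suml.
      rewrite exchange_big /=; apply: eq_bigr => s' _; rewrite mulr_sumr.
      by apply: eq_bigr => s _; ring.
    rewrite E.
    have H3 : \sum_s' m t s' * c s' (h k s') + \sum_s' m t s' * \sum_s p k s' s * Jk k s
        <= \sum_s' m t s' * (Jk k.+1 s' + dl).
      rewrite -big_split /=; apply: ler_sum => s' _; rewrite -mulrDr ler_wpM2l //.
    move: H3; under [\sum_s' m t s' * (Jk k.+1 s' + dl)]eq_bigr do rewrite mulrDr.
    rewrite big_split /= -mulr_suml => H3.
    have H4 : (\sum_s m t s) * dl <= N * dl by rewrite ler_wpM2r // ?ltW // msum.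
    rewrite -addn1 natrD mulrDr mulr1 mulrDl.
    lra.
  have := tele n (leqnn n); rewrite subnn => H.
  exact: H.
Qed.


Lemma main_le : (valueB A c Phat D eps <= valueA A c Phat D eps)%E.
Proof.
have [L [hL1 [hL2 hL3]]] := dec_lim Jk_dec Jk_ge0.
have Lfeas : feasA A c Phat D eps L.
  move=> s a ha; change (L s <= G s a L).
  apply: (le_eps_C (C:=1)) => // e e0.
  have [k hk] := hL2 e e0.
  apply: (le_trans (hL1 k.+1 s)).
  apply: (le_trans (T1 (Jk k) ha)).
  rewrite !G_Hq mulr1 -addrA lerD2l; exact: Hq_mono (ltW e0) hk.
have hAv : ((\sum_s L s)%:E <= valueA A c Phat D eps)%E.
  by apply: ereal_sup_ubound; exists L.
apply: le_trans hAv.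
apply/lee_addgt0Pr => e e0.
pose N := \sum_(s : S) (1 : R).
have N0 : 0 <= N by apply: sumr_ge0.
pose e1 := e / (2 * N + 1).
have e10 : 0 < e1 by rewrite divr_gt0 //; lra.
have [k hk] := hL2 e1 e10.
have k0 : (0 : R) <= k%:R by apply: ler0n.
pose dl := e1 / (k%:R + 1).
have dl0 : 0 < dl by rewrite divr_gt0 //; lra.
have [q [w [hC hf hcost]]] := construct k dl0.
apply: (@le_trans _ _ ((\sum_s \sum_(a in A s) q s a * c s a)%:E)).
  by apply: ereal_inf_lbound; exists (q, Pt q w) => //; exact: feasB_of.
rewrite lee_fin.
have h1 : \sum_s Jk k s <= \sum_s L s + e1 * N.
  rewrite /N mulr_sumr -big_split /=; apply: ler_sum => s _; rewrite mulr1; exact: hk.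
have h2 : dl * k%:R <= e1.
  rewrite /dl mulrAC ler_pdivrMr; last by lra.
  nra.
have h3 : dl * k%:R * N <= e1 * N by rewrite ler_wpM2r.
have E : e = e1 * N * 2 + e1.
  rewrite /e1; field; lra.
move: hcost; rewrite -/N => hcost; lra.
Qed.

Lemma weak_le : (valueA A c Phat D eps <= valueB A c Phat D eps)%E.
Proof.
apply: ge_ereal_sup => _ [x hx <-]; apply: le_ereal_inf_tmp => _ [[q P] hqP <-].
rewrite lee_fin; exact: weak hx hqP.
Qed.

End Main.

Unset Implicit Arguments.
Theorem mainTheorem3 (R : realType) (S Act : finType) (A : S -> {set Act})
  (c : S -> Act -> R) (Phat : S -> Act -> S -> R)
  (D : (S -> R) -> (S -> R) -> R) (eps : S -> Act -> R) :
  (forall s a, 0 <= c s a /\ c s a <= 1) ->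
  (forall s a, subdist (Phat s a)) ->
  (forall p p', nonneg_vec p -> nonneg_vec p' -> 0 <= D p p') ->
  jointly_convex D ->
  (forall p, nonneg_vec p -> D p p = 0) ->
  pos_homogeneous D ->
  (forall s a, 0 < eps s a) ->
  LP_feasible A Phat ->
  valueA A c Phat D eps = valueB A c Phat D eps.
Proof.
move=> hc hP hD0 hconv hDpp hhom heps [q0 hq0].
have hA : forall s, exists a, a \in A s.
  move=> s; have [a ha|hn] := pickP (fun a => a \in A s); first by exists a.
  have := hq0.2 s; rewrite big_pred0 // => h.
  have : 0 <= \sum_s' \sum_(a in A s') q0 s' a * Phat s' a s.
    apply: sumr_ge0 => s' _; apply: sumr_ge0 => a ha.
    rewrite mulr_ge0 //; first by case: hq0 => h0 _; apply: h0.
    by case: (sub_bounds s (hP s' a)).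
  move: h; lra.
have nu00 s : 0 <= nu0 A q0 s by apply: le_trans (nu0_ge1 hP hq0 s); apply: ler01.
have [w1 [hw10 hw1]] := lin_solve (Kp_ge0 hP hq0) nu00 (nu0_eq hP hq0)
   (fun s => @ler01 R).
have [J [hJ0 hJ]] := lin_solve (Kp_ge0 hP hq0) nu00 (nu0_eq hP hq0) (cpi_ge0 hc hP hq0).
apply/le_anti/andP; split; first exact: weak_le.
exact: (main_le hc hP hconv hDpp hhom heps hA hq0 hJ0 hJ hw10 hw1).
Qed.
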